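(* Let $X$ be a compact Hausdorff space and let $a,b,c\in C(X,M_n)$ be positive elements such that $ba=a$ and $cb=b$. Then there exist open sets $U_k\subseteq X$ for $0\le k\le n$, and continuous functions $p_k\colon U_k\to M_n$ whose values are rank $k$ projections, such that: (1) $\bigcup_{k=0}^n U_k=X$; (2) if $k\le l$ and $x\in U_k\cap U_l$ then $p_k(x)\le p_l(x)$; (3) for all $x\in U_k$, $p_k(x)a(x)=a(x)$ and $c(x)p_k(x)=p_k(x)$. *)

(* Defs.v *)
From HB Require Import structures.
From mathcomp Require Import all_boot all_order all_algebra.
From mathcomp Require Import all_classical all_reals all_analysis.
From mathcomp Require Import complex.
Export numFieldTopology.Exports numFieldNormedType.Exports.

Set Implicit Arguments.
Unset Strict Implicit.
Unset Printing Implicit Defensive.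

Import Order.TTheory GRing.Theory Num.Theory.
Local Open Scope ring_scope.

(* The complex numbers R[i] (R a real field) get their usual metric topology
   (induced by the complex modulus), exactly as MathComp-Analysis does for
   abstract numFieldTypes in num_topology.v. Matrices 'M[R[i]]_(m,n) then
   carry the product (= norm) topology provided by matrix_normedtype.v. *)
#[export, non_forgetful_inheritance]
HB.instance Definition _ (R : rcfType) := PseudoPointedMetric.copy R[i] (R[i])^o.

Definition adjmx (R : rcfType) m n (A : 'M[R[i]]_(m, n)) : 'M[R[i]]_(n, m) :=
  map_mx conjc A^T.

Definition psd_mx (R : rcfType) n (A : 'M[R[i]]_n) : Prop :=
  adjmx A = A /\ forall v : 'cV[R[i]]_n, 0 <= (adjmx v *m A *m v) ord0 ord0.

Definition orth_proj_mx (R : rcfType) n (P : 'M[R[i]]_n) : Prop :=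
  P *m P = P /\ adjmx P = P.

Definition le_mx (R : rcfType) n (A B : 'M[R[i]]_n) : Prop := psd_mx (B - A).

(* Main.v *)
Require Import Defs.
From HB Require Import structures.
From mathcomp Require Import all_boot all_order all_algebra.
From mathcomp Require Import all_classical all_reals all_analysis.
From mathcomp Require Import complex.
From mathcomp Require Import ring lra zify.
Import numFieldTopology.Exports numFieldNormedType.Exports.
Import Order.TTheory GRing.Theory Num.Theory.
Local Open Scope ring_scope.
Set Implicit Arguments.
Unset Strict Implicit.
Unset Printing Implicit Defensive.


Section Adj.
Variable R : realType.
Local Notation C := (R[i]).

Lemma adjmxE m n (A : 'M[C]_(m, n)) : adjmx A = (A ^t Num.conj)%sesqui.
Proof. by []. Qed.

Lemma adjmxK m n (A : 'M[C]_(m, n)) : adjmx (adjmx A) = A.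
Proof. by rewrite !adjmxE trmxCK. Qed.

Lemma adjmxM m n p (A : 'M[C]_(m, n)) (B : 'M[C]_(n, p)) :
  adjmx (A *m B) = adjmx B *m adjmx A.
Proof. by rewrite !adjmxE trmx_mul map_mxM. Qed.

Lemma adjmxD m n (A B : 'M[C]_(m, n)) : adjmx (A + B) = adjmx A + adjmx B.
Proof. by rewrite !adjmxE linearD /= map_mxD. Qed.

Lemma adjmxN m n (A : 'M[C]_(m, n)) : adjmx (- A) = - adjmx A.
Proof. by rewrite !adjmxE linearN /= map_mxN. Qed.

Lemma adjmxB m n (A B : 'M[C]_(m, n)) : adjmx (A - B) = adjmx A - adjmx B.
Proof. by rewrite adjmxD adjmxN. Qed.

Lemma adjmx1 n : adjmx (1%:M : 'M[C]_n) = 1%:M.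
Proof. by rewrite adjmxE trmx1 map_mx1. Qed.

Lemma conjc_R (r : R) : conjc ((r%:C)%C : C) = (r%:C)%C.
Proof. by apply/eqP; rewrite eq_complex /= oppr0 !eqxx. Qed.

Lemma adjmx_scalar n (r : R) : adjmx ((r%:C)%C%:M : 'M[C]_n) = (r%:C)%C%:M.
Proof.
apply/matrixP => i j; rewrite !mxE eq_sym.
by case: (_ == _); rewrite ?mulr1n ?mulr0n ?conjc_R ?conjc0.
Qed.

Lemma adjmx_diag n (e : 'I_n -> R) :
  adjmx (diag_mx (\row_j ((e j)%:C)%C) : 'M[C]_n) = diag_mx (\row_j ((e j)%:C)%C).
Proof.
apply/matrixP => i j; rewrite !mxE eq_sym.
case: eqP => [->|_]; rewrite ?mulr1n ?mulr0n ?conjc0 // ?mxE.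
exact: conjc_R.
Qed.

Lemma adjmx_ij m n (A : 'M[C]_(m, n)) i j : adjmx A i j = (A j i)^*.
Proof. by rewrite !mxE. Qed.

End Adj.

Section Spec.
Variable R : realType.
Local Notation C := (R[i]).
Variable n : nat.
Implicit Types (A B P Q : 'M[C]_n) (v w : 'cV[C]_n).

Lemma RC_sum (I : Type) (r : seq I) (P : pred I) (F : I -> R) :
  ((\sum_(i <- r | P i) F i)%:C)%C = \sum_(i <- r | P i) ((F i)%:C)%C :> C.
Proof. exact: rmorph_sum. Qed.

Lemma RC_mul (a b : R) : ((a * b)%:C)%C = (a%:C)%C * (b%:C)%C :> C.
Proof. exact: rmorphM. Qed.

Lemma RC_add (a b : R) : ((a + b)%:C)%C = (a%:C)%C + (b%:C)%C :> C.
Proof. exact: rmorphD. Qed.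

Lemma RC_opp (a : R) : ((- a)%:C)%C = - (a%:C)%C :> C.
Proof. exact: rmorphN. Qed.

Lemma RC_sub (a b : R) : ((a - b)%:C)%C = (a%:C)%C - (b%:C)%C :> C.
Proof. exact: rmorphB. Qed.

Lemma RC_le (a b : R) : ((a%:C)%C <= (b%:C)%C :> C) = (a <= b).
Proof. exact: lecR. Qed.

Lemma RC_lt (a b : R) : ((a%:C)%C < (b%:C)%C :> C) = (a < b).
Proof. exact: ltcR. Qed.

Definition qf A v : C := (adjmx v *m A *m v) 0 0.

Lemma qfD A B v : qf (A + B) v = qf A v + qf B v.
Proof. by rewrite /qf mulmxDr mulmxDl mxE. Qed.

Lemma qfN A v : qf (- A) v = - qf A v.
Proof. by rewrite /qf mulmxN mulNmx mxE. Qed.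

Lemma qfB A B v : qf (A - B) v = qf A v - qf B v.
Proof. by rewrite qfD qfN. Qed.

Lemma qf_scalar (r : C) v : qf (r%:M) v = r * qf 1%:M v.
Proof. by rewrite /qf mul_mx_scalar mulmx1 -scalemxAl mxE. Qed.

Lemma qfM P A v : qf (adjmx P *m A *m P) v = qf A (P *m v).
Proof. by rewrite /qf adjmxM !mulmxA. Qed.

Definition nrm2 (z : C) : R := complex.Re z ^+ 2 + complex.Im z ^+ 2.

Lemma nrm2E (z : C) : ((nrm2 z)%:C)%C = z^* * z.
Proof.
case: z => a b; rewrite /nrm2 /=; apply/eqP; rewrite eq_complex /=.
by apply/andP; split; apply/eqP; ring.
Qed.

Lemma nrm2_ge0 z : 0 <= nrm2 z.
Proof. by rewrite /nrm2 addr_ge0 // sqr_ge0. Qed.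

Lemma nrm2_eq0 z : nrm2 z = 0 -> z = 0.
Proof.
case: z => a b; rewrite /nrm2 /= => /eqP; rewrite paddr_eq0 ?sqr_ge0 //.
by rewrite !sqrf_eq0 => /andP[/eqP-> /eqP->].
Qed.

Definition vn v : R := \sum_i nrm2 (v i 0).

Lemma vn_ge0 v : 0 <= vn v.
Proof. by apply: sumr_ge0 => i _; apply: nrm2_ge0. Qed.

Lemma vn_eq0 v : vn v = 0 -> v = 0.
Proof.
move=> /eqP; rewrite psumr_eq0; last by move=> i _; apply: nrm2_ge0.
move=> /allP H; apply/matrixP => i j; rewrite ord1 mxE.
by apply: nrm2_eq0; apply/eqP; apply: H; rewrite mem_index_enum.
Qed.

Lemma qf1 v : qf 1%:M v = ((vn v)%:C)%C.
Proof.
rewrite /qf mulmx1 mxE /vn RC_sum; apply: eq_bigr => i _.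
by rewrite nrm2E !mxE.
Qed.


Definition herm A := adjmx A = A.
Definition Vm A : 'M[C]_n := adjmx (spectralmx A).
Definition ev A (j : 'I_n) : R := complex.Re (spectral_diag A 0 j).
Definition Dg (e : 'I_n -> R) : 'M[C]_n := diag_mx (\row_j ((e j)%:C)%C).
Definition W A e := Vm A *m Dg e *m adjmx (Vm A).

Lemma VmK A : adjmx (Vm A) *m Vm A = 1%:M.
Proof. by rewrite /Vm adjmxK; apply/unitarymxP; apply: spectral_unitarymx. Qed.

Lemma VmK' A : Vm A *m adjmx (Vm A) = 1%:M.
Proof.
rewrite /Vm adjmxK.
have U := spectral_unitarymx A.
have := invmx_unitary U; rewrite -adjmxE => <-.
by apply: mulVmx; apply: unitarymx_unit.
Qed.

Lemma hermE A : herm A -> A = W A (ev A).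
Proof.
move=> hA.
have hs : A \is hermsymmx.
  by apply/is_hermitianmxP; rewrite expr0 scale1r; change (A = adjmx A); rewrite hA.
have /orthomx_spectralP {1}-> := hermitian_normalmx hs.
rewrite invmx_unitary ?spectral_unitarymx // /W /Vm adjmxK -adjmxE; congr (_ *m _ *m _).
congr diag_mx; apply/matrixP => i j; rewrite ord1 mxE /ev.
have /mxOverP /(_ 0 j) := hermitian_spectral_diag_real hs.
by move/RRe_real.
Qed.

Arguments hermE [A].

Lemma Dg_mul e e' : Dg e *m Dg e' = Dg (fun j => e j * e' j).
Proof.
rewrite /Dg mulmx_diag; congr diag_mx; apply/matrixP => i j.
by rewrite !mxE rmorphM.
Qed.

Lemma W_mul A e e' : W A e *m W A e' = W A (fun j => e j * e' j).
Proof.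
by rewrite /W !mulmxA -[_ *m adjmx _ *m Vm A]mulmxA VmK mulmx1 -[_ *m Dg e *m _]mulmxA Dg_mul.
Qed.

Lemma W_add A e e' : W A e + W A e' = W A (fun j => e j + e' j).
Proof.
rewrite /W -mulmxDl -mulmxDr; congr (_ *m _ *m _).
by rewrite /Dg -linearD /=; congr diag_mx; apply/matrixP => i j; rewrite !mxE rmorphD.
Qed.

Lemma W_opp A e : - W A e = W A (fun j => - e j).
Proof.
rewrite /W -mulNmx -mulmxN; congr (_ *m _ *m _).
by rewrite /Dg -linearN /=; congr diag_mx; apply/matrixP => i j; rewrite !mxE rmorphN.
Qed.

Lemma W_sub A e e' : W A e - W A e' = W A (fun j => e j - e' j).
Proof. by rewrite W_opp W_add. Qed.

Lemma W_const A r : W A (fun _ => r) = ((r%:C)%C)%:M.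
Proof.
rewrite /W /Dg.
have -> : (\row_j ((r%:C)%C) : 'rV[C]_n) = const_mx ((r%:C)%C) by apply/matrixP => i j; rewrite !mxE.
by rewrite diag_const_mx mul_mx_scalar -scalemxAl VmK' scalemx1.
Qed.

Lemma W1 A : W A (fun _ => 1) = 1%:M.
Proof. by rewrite W_const. Qed.

Lemma adj_W A e : adjmx (W A e) = W A e.
Proof. by rewrite /W !adjmxM adjmxK adjmx_diag mulmxA. Qed.

Lemma qf_Dg e w : qf (Dg e) w = ((\sum_j e j * nrm2 (w j 0))%:C)%C.
Proof.
rewrite /qf mul_mx_diag mxE RC_sum; apply: eq_bigr => j _.
by rewrite !mxE RC_mul nrm2E; ring.
Qed.

Lemma qf_W A e v : qf (W A e) v = ((\sum_j e j * nrm2 ((adjmx (Vm A) *m v) j 0))%:C)%C.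
Proof.
by rewrite /W -{1}[Vm A]adjmxK qfM qf_Dg.
Qed.

Lemma vn_unitary A v : vn (adjmx (Vm A) *m v) = vn v.
Proof.
apply: complexI.
rewrite -[RHS]qf1 -(W1 A) qf_W /vn; apply: f_equal; apply: eq_bigr => j _.
by rewrite mul1r.
Qed.


Definition chi A (s : R) j : R := ((s < ev A j)%R)%:R.
Definition Pr A s := W A (chi A s).

Lemma chi2 A s j : chi A s j * chi A s j = chi A s j.
Proof. by rewrite /chi; case: (_ < _); rewrite ?mulr1 ?mulr0. Qed.

Lemma Pr_idem A s : Pr A s *m Pr A s = Pr A s.
Proof. by rewrite /Pr W_mul; congr W; apply: funext => j; rewrite chi2. Qed.

Lemma Pr_adj A s : adjmx (Pr A s) = Pr A s.
Proof. exact: adj_W. Qed.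

Lemma Pr_comm A s : herm A -> A *m Pr A s = Pr A s *m A.
Proof.
move=> hA; rewrite {1 4}(hermE hA) /Pr !W_mul; congr W.
by apply: funext => j; rewrite mulrC.
Qed.

Lemma oneB_Pr A s : 1%:M - Pr A s = W A (fun j => 1 - chi A s j).
Proof. by rewrite -(W1 A) W_sub. Qed.

Lemma W_psd A e : (forall j, 0 <= e j) -> psd_mx (W A e).
Proof.
move=> e0; split; first exact: adj_W.
move=> v; change (0 <= qf (W A e) v); rewrite qf_W -[0]/((0 : R)%:C)%C RC_le.
by apply: sumr_ge0 => j _; apply: mulr_ge0 => //; apply: nrm2_ge0.
Qed.

Lemma Pr_le A s s' : (forall j, s' < ev A j -> s < ev A j) -> le_mx (Pr A s') (Pr A s).
Proof.
move=> H; rewrite /le_mx /Pr W_sub; apply: W_psd => j.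
rewrite /chi; case E: (s' < ev A j); first by rewrite (H _ E) subrr.
by rewrite subr0; case: (_ < _).
Qed.

Lemma QF1 A s r v : herm A -> (forall j, s < ev A j -> r <= ev A j) ->
  0 <= qf (Pr A s *m (A - (r%:C)%C%:M) *m Pr A s) v.
Proof.
move=> hA H; rewrite {2}(hermE hA) -(W_const A) W_sub /Pr !W_mul qf_W.
rewrite -[0]/((0 : R)%:C)%C RC_le; apply: sumr_ge0 => j _; apply: mulr_ge0; last exact: nrm2_ge0.
rewrite /chi; case E: (s < ev A j); rewrite ?mul0r ?mulr0 // mul1r mulr1 subr_ge0.
exact: H.
Qed.

Lemma QF2 A s r v : herm A -> (forall j, ev A j <= s -> ev A j <= r) ->
  0 <= qf ((1%:M - Pr A s) *m ((r%:C)%C%:M - A) *m (1%:M - Pr A s)) v.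
Proof.
move=> hA H; rewrite oneB_Pr -(W_const A r) [X in W A _ - X](hermE hA) W_sub !W_mul qf_W.
rewrite -[0]/((0 : R)%:C)%C RC_le; apply: sumr_ge0 => j _; apply: mulr_ge0; last exact: nrm2_ge0.
rewrite /chi; case E: (s < ev A j); rewrite ?subrr ?mul0r ?mulr0 // subr0 mul1r mulr1 subr_ge0.
by apply: H; rewrite leNgt E.
Qed.

Lemma Pr_fix_a A s (a : 'M[C]_n) : herm A -> A *m a = a -> s < 1 -> Pr A s *m a = a.
Proof.
move=> hA Aa s1.
set Z := adjmx (Vm A) *m a.
have aZ : a = Vm A *m Z by rewrite /Z mulmxA VmK' mul1mx.
have DZ : Dg (ev A) *m Z = Z.
  have := congr1 (mulmx (adjmx (Vm A))) Aa.
  rewrite {2}(hermE hA) /W -/Z !mulmxA VmK mul1mx -!mulmxA -/Z.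
  by [].
rewrite {2}aZ /Pr /W -mulmxA -/Z -mulmxA; congr (_ *m _); clearbody Z.
apply/matrixP => i j; have /matrixP/(_ i j) := DZ.
rewrite /Dg !mul_diag_mx !mxE /chi.
case E: (s < ev A i); first by rewrite mul1r.
move=> h; rewrite mul0r; apply/esym.
have ne : ev A i != 1.
  by apply/eqP => e1; move: E; rewrite e1 s1.
apply/eqP; move/eqP: h; rewrite -subr_eq0 -{2}[Z i j]mul1r -mulrBl mulf_eq0.
case/orP => // /eqP; rewrite -RC_sub => /complexI /eqP; rewrite subr_eq0 (negbTE ne).
by [].
Qed.

Lemma Pr_fix_c A s (c : 'M[C]_n) : herm A -> c *m A = A -> 0 <= s -> c *m Pr A s = Pr A s.
Proof.
move=> hA cA s0.
have Y : c *m Vm A *m Dg (ev A) = Vm A *m Dg (ev A).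
  have := congr1 (mulmx^~ (Vm A)) cA.
  by rewrite {1 3}(hermE hA) /W !mulmxA -![_ *m adjmx (Vm A) *m Vm A]mulmxA VmK !mulmx1.
rewrite /Pr /W !mulmxA; congr (_ *m _).
apply/matrixP => i j; have /matrixP/(_ i j) := Y.
rewrite /Dg !mul_mx_diag !mxE /chi.
case E: (s < ev A j); last by rewrite !mulr0.
move=> h; have ne : ((ev A j)%:C)%C != 0 :> C.
  rewrite -[0]/((0 : R)%:C)%C; apply/eqP => /complexI e0; move: E; rewrite e0.
  by rewrite ltNge s0.
by move: h => /mulIf -/(_ ne) ->.
Qed.

End Spec.


Section Frob.
Variable R : realType.
Local Notation C := (R[i]).
Variable n : nat.
Implicit Types (A B M P Q X Y Z : 'M[C]_n) (u v w : 'cV[C]_n).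

Lemma ReD (x y : C) : complex.Re (x + y) = complex.Re x + complex.Re y.
Proof. by case: x; case: y. Qed.
Lemma ImD (x y : C) : complex.Im (x + y) = complex.Im x + complex.Im y.
Proof. by case: x; case: y. Qed.
Lemma ReN (x : C) : complex.Re (- x) = - complex.Re x.
Proof. by case: x. Qed.
Lemma ImN (x : C) : complex.Im (- x) = - complex.Im x.
Proof. by case: x. Qed.

Lemma nrm2_conj (z : C) : nrm2 z^* = nrm2 z.
Proof. by case: z => a b; rewrite /nrm2 /= sqrrN. Qed.

Lemma nrm2_sub (x y : C) : nrm2 (x - y) <= 2 * nrm2 x + 2 * nrm2 y.
Proof.
rewrite /nrm2 ReD ImD ReN ImN.
have := sqr_ge0 (complex.Re x + complex.Re y); have := sqr_ge0 (complex.Im x + complex.Im y).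
rewrite !sqrrD; lra.
Qed.

Lemma nrm2N (x : C) : nrm2 (- x) = nrm2 x.
Proof. by rewrite /nrm2 ReN ImN !sqrrN. Qed.

Definition FR (M : 'M[C]_n) : R := \sum_j \sum_i nrm2 (M i j).

Lemma FR_ge0 M : 0 <= FR M.
Proof. by apply: sumr_ge0 => j _; apply: sumr_ge0 => i _; apply: nrm2_ge0. Qed.

Lemma frE M : \tr (adjmx M *m M) = ((FR M)%:C)%C.
Proof.
rewrite /mxtrace /FR RC_sum; apply: eq_bigr => j _.
rewrite mxE RC_sum; apply: eq_bigr => i _.
by rewrite nrm2E !mxE.
Qed.

Lemma FR_col Z : FR Z = \sum_j vn (col j Z).
Proof. by apply: eq_bigr => j _; apply: eq_bigr => i _; rewrite mxE. Qed.

Lemma FR_adj M : FR (adjmx M) = FR M.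
Proof.
rewrite /FR exchange_big; apply: eq_bigr => j _; apply: eq_bigr => i _.
by rewrite !mxE nrm2_conj.
Qed.

Lemma FR_opp M : FR (- M) = FR M.
Proof. by apply: eq_bigr => j _; apply: eq_bigr => i _; rewrite mxE nrm2N. Qed.

Lemma FR_sub A B : FR (A - B) <= 2 * FR A + 2 * FR B.
Proof.
rewrite /FR !mulr_sumr -big_split /=; apply: ler_sum => j _.
rewrite !mulr_sumr -big_split /=; apply: ler_sum => i _.
by rewrite !mxE nrm2_sub.
Qed.

Lemma FR_entry M i j : nrm2 (M i j) <= FR M.
Proof.
have h1 : nrm2 (M i j) <= \sum_i0 nrm2 (M i0 j).
  rewrite (bigD1 i) //.
  change (nrm2 (M i j) <= nrm2 (M i j) + \sum_(i0 | true && (i0 != i)) nrm2 (M i0 j)).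
  by rewrite lerDl; apply: sumr_ge0 => k _; apply: nrm2_ge0.
apply: le_trans h1 _; rewrite /FR [in X in _ <= X](bigD1 j) //.
change (\sum_i0 nrm2 (M i0 j) <= \sum_i0 nrm2 (M i0 j) + \sum_(k | true && (k != j)) \sum_i0 nrm2 (M i0 k)).
rewrite lerDl.
by apply: sumr_ge0 => k _; apply: sumr_ge0 => l _; apply: nrm2_ge0.
Qed.

Lemma FR_bound M m : (forall i j, nrm2 (M i j) <= m) -> FR M <= (n%:R * n%:R) * m.
Proof.
move=> H; rewrite /FR; apply: le_trans (ler_sum _ (fun j _ => ler_sum _ (fun i _ => H i j))) _.
by rewrite !sumr_const !card_ord -mulrnA -natrM mulr_natl.
Qed.

Lemma vn_proj Q u : Q *m Q = Q -> adjmx Q = Q -> vn (Q *m u) <= vn u.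
Proof.
move=> QQ aQ.
have h : ((vn u)%:C)%C = ((vn (Q *m u))%:C)%C + ((vn ((1%:M - Q) *m u))%:C)%C :> C.
  rewrite -!qf1 -!qfM aQ adjmxB adjmx1 aQ mulmx1 QQ.
  rewrite -qfD; congr qf.
  by rewrite mulmx1 mulmxBl mul1mx mulmxBr mulmx1 QQ subrr subr0 addrC subrK.
have : vn (Q *m u) + vn ((1%:M - Q) *m u) = vn u by apply: complexI; rewrite h RC_add.
move=> <-; rewrite lerDl; exact: vn_ge0.
Qed.

Lemma FR_projl Q M : Q *m Q = Q -> adjmx Q = Q -> FR (Q *m M) <= FR M.
Proof.
move=> QQ aQ; rewrite !FR_col; apply: ler_sum => j _.
by rewrite !colE -mulmxA; apply: vn_proj.
Qed.

Lemma FR_projr Q M : Q *m Q = Q -> adjmx Q = Q -> FR (M *m Q) <= FR M.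
Proof.
move=> QQ aQ; rewrite -FR_adj adjmxM aQ -[FR M]FR_adj; exact: FR_projl.
Qed.

Lemma tr_qf Z A : \tr (adjmx Z *m A *m Z) = \sum_j qf A (col j Z).
Proof.
rewrite /mxtrace; apply: eq_bigr => j _.
rewrite /qf !mxE; apply: eq_bigr => k _; rewrite !mxE; congr (_ * _).
by apply: eq_bigr => i _; rewrite !mxE.
Qed.

Lemma adjmx_scaleR (r : R) (M : 'M[C]_n) : adjmx ((r%:C)%C *: M) = (r%:C)%C *: adjmx M.
Proof.
apply/matrixP => i j; rewrite !mxE; case: (M j i) => a b.
by apply/eqP; rewrite eq_complex /=; apply/andP; split; apply/eqP; ring.
Qed.

Lemma tr_adj M : \tr (adjmx M) = (\tr M)^*.
Proof. by rewrite adjmxE -map_trmx mxtrace_tr trace_map_mx. Qed.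

End Frob.


Section DKsec.
Variable R : realType.
Local Notation C := (R[i]).
Variable n : nat.
Implicit Types (A B M P Q X Y Z : 'M[C]_n) (u v w : 'cV[C]_n).

Lemma exists_common P P0 : P *m P = P -> (n < \rank P + (n - \rank P0))%N ->
  exists v : 'cV[C]_n, [/\ v != 0, P *m v = v & P0 *m v = 0].
Proof.
move=> PP hr.
set A := P^T; set K := kermx (P0^T).
have nc : ~~ ((A :&: K) <= (0 : 'M[C]_n))%MS.
  apply/negP => h.
  have := mxrank_adds_leqif A K; rewrite h => -[_ /eqP/esym].
  rewrite /A mxrank_tr mxrank_ker mxrank_tr => e.
  have := rank_leq_col (A + K)%MS; rewrite /A -e => h2.
  by move: hr; rewrite ltnNge h2.
have [i hi] := row_subPn nc.
set r := row i (A :&: K)%MS.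
have rA : (r <= A)%MS by apply: submx_trans (row_sub _ _) (capmxSl _ _).
have rK : (r <= K)%MS by apply: submx_trans (row_sub _ _) (capmxSr _ _).
exists r^T; split.
- apply/eqP => r0; move: hi; rewrite -/r.
  have -> : r = 0 by apply: trmx_inj; rewrite r0 trmx0.
  by rewrite sub0mx.
- have [w ->] := submxP rA.
  by rewrite trmx_mul /A trmxK mulmxA PP.
- have := sub_kermxP rK => h.
  by rewrite -[P0]trmxK -trmx_mul h trmx0.
Qed.

Definition ab (z : C) : R := Num.sqrt (nrm2 z).

Lemma ab_ge0 z : 0 <= ab z.
Proof. exact: sqrtr_ge0. Qed.

Lemma ab_sq z : ab z ^+ 2 = nrm2 z.
Proof. by rewrite /ab sqr_sqrtr // nrm2_ge0. Qed.

Lemma normE (z : C) : `|z| = ((ab z)%:C)%C.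
Proof. by rewrite normc_def. Qed.

Lemma normRC (r : R) : `|(r%:C)%C : C| = ((`|r|)%:C)%C.
Proof. by rewrite normE /ab /nrm2 /= expr0n /= addr0 sqrtr_sqr. Qed.

Lemma ab_conj z : ab z^* = ab z.
Proof. by rewrite /ab nrm2_conj. Qed.

Lemma abM (x y : C) : ab (x * y) = ab x * ab y.
Proof. by apply: complexI; rewrite -normE RC_mul -!normE normrM. Qed.

Lemma qf_bound (E : 'M[C]_n) v (m : R) : (forall i j, ab (E i j) <= m) ->
  `|qf E v| <= (((2 * n%:R) * m * vn v)%:C)%C.
Proof.
move=> H.
have e : qf E v = \sum_j \sum_i (v i 0)^* * E i j * v j 0.
  rewrite /qf !mxE; apply: eq_bigr => j _; rewrite !mxE mulr_suml; apply: eq_bigr => i _.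
  by rewrite !mxE.
rewrite e; apply: le_trans (ler_norm_sum _ _ _) _.
apply: le_trans (ler_sum _ (fun j _ => ler_norm_sum _ _ _)) _.
have step : forall i j, `|(v i 0)^* * E i j * v j 0| <= ((m * (nrm2 (v i 0) + nrm2 (v j 0)))%:C)%C.
  move=> i j; rewrite normE !abM ab_conj RC_le.
  have h1 := H i j; have h2 := ab_ge0 (E i j); have h3 := ab_ge0 (v i 0); have h4 := ab_ge0 (v j 0).
  rewrite -!ab_sq.
  move: h1 h2 h3 h4; set x := ab (v i 0); set y := ab (v j 0); set z := ab (E i j) => h1 h2 h3 h4.
  have a1 : x * z * y <= x * m * y by apply: ler_wpM2r => //; apply: ler_wpM2l.
  have a2 : x * y <= x ^+ 2 + y ^+ 2 by nra.
  have m0 : 0 <= m by apply: le_trans h2 h1.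
  nra.
apply: le_trans (ler_sum _ (fun j _ => ler_sum _ (fun i _ => step i j))) _.
have -> : \sum_j \sum_i ((m * (nrm2 (v i 0) + nrm2 (v j 0)))%:C)%C =
    ((\sum_j \sum_i m * (nrm2 (v i 0) + nrm2 (v j 0)))%:C)%C :> C.
  by rewrite RC_sum; apply: eq_bigr => j _; rewrite RC_sum.
rewrite RC_le.
rewrite (eq_bigr (fun j => m * (vn v + n%:R * nrm2 (v j 0)))); last first.
  by move=> j _; rewrite -mulr_sumr big_split /= sumr_const card_ord mulr_natl.
rewrite -mulr_sumr big_split /= sumr_const card_ord -mulr_sumr -/(vn v).
rewrite -[vn v *+ n]mulr_natr.
by rewrite le_eqVlt; apply/orP; left; apply/eqP; ring.
Qed.

End DKsec.


Section DKsec2.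
Variable R : realType.
Local Notation C := (R[i]).
Variable n : nat.
Implicit Types (A B M P Q X Y Z : 'M[C]_n) (u v w : 'cV[C]_n).

Lemma conjC_R (r : R) : ((r%:C)%C : C)^* = (r%:C)%C.
Proof. exact: conjc_R. Qed.

Lemma DK (P1 B1 P2 B2 : 'M[C]_n) (al be : R) :
  P1 *m P1 = P1 -> adjmx P1 = P1 -> P2 *m P2 = P2 -> adjmx P2 = P2 ->
  B1 *m P1 = P1 *m B1 -> B2 *m P2 = P2 *m B2 -> al < be ->
  (forall v, 0 <= qf ((1%:M - P1) *m ((al%:C)%C%:M - B1) *m (1%:M - P1)) v) ->
  (forall v, 0 <= qf (P2 *m (B2 - (be%:C)%C%:M) *m P2) v) ->
  (be - al) ^+ 2 * FR ((1%:M - P1) *m P2) <= FR ((1%:M - P1) *m (B1 - B2) *m P2).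
Proof.
move=> P11 aP1 P22 aP2 c1 c2 ab H1 H2.
set Q1 := 1%:M - P1.
have Q11 : Q1 *m Q1 = Q1 by rewrite /Q1 mulmxBl mul1mx mulmxBr mulmx1 P11 subrr subr0.
have aQ1 : adjmx Q1 = Q1 by rewrite /Q1 adjmxB adjmx1 aP1.
have cQ : B1 *m Q1 = Q1 *m B1 by rewrite /Q1 mulmxBr mulmxBl mulmx1 mul1mx c1.
set X := Q1 *m P2.
set Y := Q1 *m (B1 - B2) *m P2.
have YE : Y = B1 *m X - X *m B2.
  by rewrite /Y /X mulmxBr mulmxBl !mulmxA cQ -!mulmxA c2.
have b1 : forall u, Q1 *m u = u -> qf B1 u <= (al%:C)%C * ((vn u)%:C)%C.
  move=> u Qu; have := H1 u; rewrite -/Q1 -{1}aQ1 qfM Qu qfB qf_scalar qf1 subr_ge0.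
  done.
have b2 : forall u, P2 *m u = u -> (be%:C)%C * ((vn u)%:C)%C <= qf B2 u.
  move=> u Pu; have := H2 u; rewrite -{1}aP2 qfM Pu qfB qf_scalar qf1 subr_ge0.
  done.
have colX : forall j, Q1 *m col j X = col j X.
  by move=> j; rewrite !colE mulmxA /X mulmxA Q11.
have colZ : forall j, P2 *m col j (adjmx X) = col j (adjmx X).
  by move=> j; rewrite !colE mulmxA /X adjmxM aP2 aQ1 mulmxA P22.
set T := \tr (adjmx X *m Y).
have TE : T = \sum_j qf B1 (col j X) - \sum_j qf B2 (col j (adjmx X)).
  rewrite /T YE mulmxBr raddfB /= mulmxA tr_qf; congr (_ - _).
  by rewrite (mxtrace_mulC (adjmx X)) -{1}[X]adjmxK tr_qf.
have Tle : T <= (((al - be) * FR X)%:C)%C.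
  rewrite TE RC_mul RC_sub mulrBl; apply: lerB.
    rewrite FR_col RC_sum mulr_sumr; apply: ler_sum => j _; apply: b1; exact: colX.
  rewrite -FR_adj FR_col RC_sum mulr_sumr; apply: ler_sum => j _; apply: b2; exact: colZ.
have [t Tt] : exists t : R, T = (t%:C)%C.
  exists (complex.Re T); move: Tle; rewrite lecE => /andP[/eqP hI _].
  by move: hI; case: (T) => a b /= <-.
have tle : t <= (al - be) * FR X by rewrite -RC_le -Tt.
set g := be - al.
have g0 : 0 < g by rewrite /g subr_gt0.
have E : ((FR ((g%:C)%C *: X + Y))%:C)%C = ((g ^+ 2 * FR X + g * t + g * t + FR Y)%:C)%C :> C.
  rewrite -frE adjmxD adjmx_scaleR mulmxDl !mulmxDr -!scalemxAl -!scalemxAr !mxtraceD !mxtraceZ.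
  rewrite !frE.
  have T2 : \tr (adjmx Y *m X) = (t%:C)%C.
    by rewrite -[X in adjmx Y *m X]adjmxK -adjmxM tr_adj -/T Tt conjC_R.
  rewrite T2 -/T Tt /g !RC_add !RC_mul !RC_opp; ring.
have := FR_ge0 ((g%:C)%C *: X + Y); move/complexI: E => ->.
have := FR_ge0 X; have := FR_ge0 Y.
move: tle; rewrite -/g; rewrite (_ : al - be = - g); last by rewrite /g opprB.
move=> tle F1 F2 F3.
nra.
Qed.

End DKsec2.


Section Ranks.
Variable R : realType.
Local Notation C := (R[i]).
Variable n : nat.
Implicit Types (A B M P Q X Y Z : 'M[C]_n) (u v w : 'cV[C]_n).

Lemma Pr_col B s j : Pr B s *m col j (Vm B) = (chi B s j)%:C%C *: col j (Vm B).
Proof.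
rewrite /Pr /W !colE mulmxA -[_ *m adjmx _ *m Vm B]mulmxA VmK mulmx1 -mulmxA scalemxAr.
congr (_ *m _); apply/matrixP => i k; rewrite /Dg mul_diag_mx !mxE.
by case: (i =P j) => [->|_]; rewrite ?mulr1n ?mulr0n ?mulr0 //.
Qed.

Lemma col_Vm_neq0 B j : col j (Vm B) != 0.
Proof.
apply/eqP => h.
have := congr1 (mulmx (adjmx (Vm B))) h; rewrite mulmx0 colE mulmxA VmK mul1mx.
move/matrixP/(_ j 0); rewrite !mxE !eqxx /= => /eqP; rewrite oner_eq0.
by [].
Qed.

Lemma sub_Pr B s1 s2 : (forall j, s1 < ev B j -> s2 < ev B j) ->
  Pr B s2 *m Pr B s1 = Pr B s1.
Proof.
move=> H; rewrite /Pr W_mul; congr W; apply: funext => j; rewrite /chi.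
case E: (s1 < ev B j); last by rewrite mulr0.
by rewrite (H _ E) mulr1.
Qed.

Lemma Pr_rank_mono B s1 s2 : (forall j, s1 < ev B j -> s2 < ev B j) ->
  (\rank (Pr B s1) <= \rank (Pr B s2))%N.
Proof.
move=> H; rewrite -mxrank_tr -[X in (_ <= X)%N]mxrank_tr; apply: mxrankS.
by rewrite -(sub_Pr H) trmx_mul submxMl.
Qed.

Lemma Pr_rank_eq B s1 s2 : (forall j, s1 < ev B j -> s2 < ev B j) ->
  (\rank (Pr B s2) <= \rank (Pr B s1))%N ->
  forall j, (s1 < ev B j) = (s2 < ev B j).
Proof.
move=> H hr j; case E1: (s1 < ev B j); first by rewrite (H _ E1).
apply/esym/negbTE/negP => E2.
set v := col j (Vm B).
have P2v : Pr B s2 *m v = v by rewrite Pr_col /chi E2 scale1r.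
have P1v : Pr B s1 *m v = 0 by rewrite Pr_col /chi E1 scale0r.
have vA2 : (v^T <= (Pr B s2)^T)%MS by rewrite -P2v trmx_mul submxMl.
have nvA1 : ~~ (v^T <= (Pr B s1)^T)%MS.
  apply/negP => /submxP [w hw].
  have : v = Pr B s1 *m w^T by rewrite -[v]trmxK hw trmx_mul trmxK.
  move=> ev; have : Pr B s1 *m v = v by rewrite ev mulmxA Pr_idem.
  by rewrite P1v => /esym/eqP; rewrite (negbTE (col_Vm_neq0 B j)).
have lt : ((Pr B s1)^T < (Pr B s2)^T)%MS.
  rewrite ltmxE; apply/andP; split.
    by rewrite -(sub_Pr H) trmx_mul submxMl.
  by apply/negP => h; move: nvA1; rewrite (submx_trans vA2 h).
move: (rank_ltmx lt); rewrite !mxrank_tr => h.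
by move: hr; rewrite leqNgt h.
Qed.

End Ranks.


Section Near.
Variable R : realType.
Local Notation C := (R[i]).
Variable n : nat.
Implicit Types (A B M P Q X Y Z : 'M[C]_n) (u v w : 'cV[C]_n).

Lemma qf_real B v : herm B -> exists r : R, qf B v = (r%:C)%C.
Proof. by move=> hB; rewrite (hermE hB) qf_W; eexists. Qed.

Lemma qf_fix P M v : adjmx P = P -> P *m v = v -> qf (P *m M *m P) v = qf M v.
Proof. by move=> aP Pv; rewrite -{1}aP qfM Pv. Qed.

Lemma adj_oneB P : adjmx P = P -> adjmx (1%:M - P) = 1%:M - P.
Proof. by move=> aP; rewrite adjmxB adjmx1 aP. Qed.

Lemma oneB_fix P v : P *m v = 0 -> (1%:M - P) *m v = v.
Proof. by move=> Pv; rewrite mulmxBl mul1mx Pv subr0. Qed.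

Lemma vn_gt0 v : v != 0 -> 0 < vn v.
Proof.
move=> nv; rewrite lt_neqAle vn_ge0 andbT; apply/eqP => h.
by move: nv; rewrite (vn_eq0 (esym h)) eqxx.
Qed.

Lemma near_main (B0 B : 'M[C]_n) (t d m : R) :
  herm B0 -> herm B -> 0 < d ->
  (forall j, ev B0 j <= t - 4 * d \/ t + 4 * d <= ev B0 j) ->
  (forall i j, ab ((B - B0) i j) <= m) -> 2 * n%:R * m <= d ->
  [/\ forall j, ev B j != t, \rank (Pr B t) = \rank (Pr B0 t) &
      d ^+ 2 * FR (Pr B t - Pr B0 t) <= FR (B - B0)].
Proof.
move=> hB0 hB d0 gap Em nm.
have diff : forall v, exists qb qb0 : R, [/\ qf B v = (qb%:C)%C, qf B0 v = (qb0%:C)%C &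
    `|qb - qb0| <= d * vn v].
  move=> v; have [qb eb] := qf_real v hB; have [qb0 eb0] := qf_real v hB0.
  exists qb, qb0; split => //.
  have := qf_bound v Em; rewrite qfB eb eb0 -RC_sub normRC RC_le => h.
  apply: le_trans h _; apply: ler_wpM2r; first exact: vn_ge0.
  by [].
have gapU : forall j, t < ev B0 j -> t + 4 * d <= ev B0 j.
  by move=> j h; case: (gap j) => // h'; lra.
have gapL : forall j, ev B0 j <= t -> ev B0 j <= t - 4 * d.
  by move=> j h; case: (gap j) => // h'; lra.
set P0 := Pr B0 t; set Pp := Pr B (t + d / 2); set Pm := Pr B (t - d / 2); set Pt := Pr B t.
have R1 : (\rank P0 <= \rank Pp)%N.
  rewrite leqNgt; apply/negP => hlt.
  have hc : (n < \rank P0 + (n - \rank Pp))%N.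
    have := rank_leq_row P0; lia.
  have [v [nv P0v Ppv]] := exists_common (Pr_idem B0 t) hc.
  have h1 := QF2 (s := t + d / 2) (r := t + d / 2) v hB (fun j h => h).
  rewrite -/Pp qf_fix ?adj_oneB ?Pr_adj ?oneB_fix // qfB qf_scalar qf1 subr_ge0 in h1.
  have h2 := QF1 (s := t) (r := t + 4 * d) v hB0 gapU.
  rewrite -/P0 qf_fix ?Pr_adj // qfB qf_scalar qf1 subr_ge0 in h2.
  have [qb [qb0 [eb eb0 hq]]] := diff v.
  rewrite eb -RC_mul RC_le in h1; rewrite eb0 -RC_mul RC_le in h2.
  have := vn_gt0 nv; move: hq; rewrite ler_norml => /andP[hq1 hq2] hv.
  nra.
have R2 : (\rank Pm <= \rank P0)%N.
  rewrite leqNgt; apply/negP => hlt.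
  have hc : (n < \rank Pm + (n - \rank P0))%N.
    have := rank_leq_row Pm; lia.
  have [v [nv Pmv P0v]] := exists_common (Pr_idem B (t - d / 2)) hc.
  have h1 := QF1 (s := t - d / 2) (r := t - d / 2) v hB (fun j h => ltW h).
  rewrite -/Pm qf_fix ?Pr_adj // qfB qf_scalar qf1 subr_ge0 in h1.
  have h2 := QF2 (s := t) (r := t - 4 * d) v hB0 gapL.
  rewrite -/P0 qf_fix ?adj_oneB ?Pr_adj ?oneB_fix // qfB qf_scalar qf1 subr_ge0 in h2.
  have [qb [qb0 [eb eb0 hq]]] := diff v.
  rewrite eb -RC_mul RC_le in h1; rewrite eb0 -RC_mul RC_le in h2.
  have := vn_gt0 nv; move: hq; rewrite ler_norml => /andP[hq1 hq2] hv.
  nra.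
have m1 : (\rank Pp <= \rank Pt)%N by apply: Pr_rank_mono => j h; lra.
have m2 : (\rank Pt <= \rank Pm)%N by apply: Pr_rank_mono => j h; lra.
have eqS : forall j, (t + d / 2 < ev B j) = (t - d / 2 < ev B j).
  apply: Pr_rank_eq; first by move=> j h; lra.
  rewrite -/Pp -/Pm; apply: leq_trans R2 R1.
have margU : forall j, t < ev B j -> t + d / 2 <= ev B j.
  by move=> j h; apply: ltW; rewrite eqS; lra.
have margL : forall j, ev B j <= t -> ev B j <= t - d / 2.
  move=> j h; rewrite leNgt; apply/negP => h'.
  by move: h'; rewrite -eqS => h''; lra.
have rk : \rank Pt = \rank P0.
  by apply/eqP; rewrite eqn_leq (leq_trans m2 R2) (leq_trans R1 m1).
split => //.
  move=> j; apply/eqP => e.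
  have := eqS j; rewrite e; have -> : (t + d / 2 < t) = false by apply/negbTE; rewrite -leNgt; lra.
  by have -> : (t - d / 2 < t) = true by apply/idP; lra.
have l1 : t - d / 2 < t + 4 * d by lra.
have l2 : t - 4 * d < t + d / 2 by lra.
have DK1 := DK (Pr_idem B t) (Pr_adj B t) (Pr_idem B0 t) (Pr_adj B0 t)
  (Pr_comm t hB) (Pr_comm t hB0) l1
  (fun v => QF2 (s := t) (r := t - d / 2) v hB margL) (fun v => QF1 (s := t) (r := t + 4 * d) v hB0 gapU).
have DK2 := DK (Pr_idem B0 t) (Pr_adj B0 t) (Pr_idem B t) (Pr_adj B t)
  (Pr_comm t hB0) (Pr_comm t hB) l2
  (fun v => QF2 (s := t) (r := t - 4 * d) v hB0 gapL) (fun v => QF1 (s := t) (r := t + d / 2) v hB margU).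
rewrite -/Pt -/P0 in DK1 DK2.
have idQ : forall P, P *m P = P -> (1%:M - P) *m (1%:M - P) = 1%:M - P.
  by move=> P PP; rewrite mulmxBl mul1mx mulmxBr mulmx1 PP subrr subr0.
have F1 : FR ((1%:M - Pt) *m (B - B0) *m P0) <= FR (B - B0).
  apply: le_trans (FR_projr _ (Pr_idem B0 t) (Pr_adj B0 t)) _.
  exact: FR_projl (idQ _ (Pr_idem B t)) (adj_oneB (Pr_adj B t)).
have F2 : FR ((1%:M - P0) *m (B0 - B) *m Pt) <= FR (B - B0).
  apply: le_trans (FR_projr _ (Pr_idem B t) (Pr_adj B t)) _.
  apply: le_trans (FR_projl _ (idQ _ (Pr_idem B0 t)) (adj_oneB (Pr_adj B0 t))) _.
  by rewrite -opprB FR_opp.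
have G : FR (Pt - P0) <= 2 * FR ((1%:M - P0) *m Pt) + 2 * FR ((1%:M - Pt) *m P0).
  have -> : Pt - P0 = Pt *m (1%:M - P0) - (1%:M - Pt) *m P0.
    by rewrite mulmxBr mulmxBl mulmx1 mul1mx opprB addrA subrK.
  apply: le_trans (FR_sub _ _) _.
  by rewrite -[FR (Pt *m _)]FR_adj adjmxM adj_oneB ?Pr_adj // Pr_adj.
have := FR_ge0 ((1%:M - P0) *m Pt); have := FR_ge0 ((1%:M - Pt) *m P0).
move: DK1 DK2 F1 F2 G.
set a := FR ((1%:M - Pt) *m P0); set b := FR ((1%:M - P0) *m Pt); set F := FR (B - B0).
set a' := FR ((1%:M - Pt) *m (B - B0) *m P0); set b' := FR ((1%:M - P0) *m (B0 - B) *m Pt).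
set G := FR (Pt - P0).
move=> DK1 DK2 F1 F2 HG ha hb.
have hd2 : 0 < d ^+ 2 by rewrite exprn_gt0.
nra.
Qed.

End Near.


Section Misc.
Variable R : realType.
Variable n : nat.

Lemma lb_pos (f : 'I_n -> R) : (forall j, 0 < f j) -> exists e : R, 0 < e /\ forall j, e <= f j.
Proof.
move=> fp.
suff : forall s : seq 'I_n, exists e : R, 0 < e /\ forall j, j \in s -> e <= f j.
  by case/(_ (enum 'I_n)) => e [e0 he]; exists e; split => // j; apply: he; rewrite mem_enum.
elim => [|j s [e [e0 he]]]; first by exists 1.
exists (Num.min (f j) e); split; first by rewrite lt_min fp e0.
move=> i; rewrite in_cons => /orP[/eqP->|/he h]; first by rewrite ge_min lexx.
by rewrite ge_min h orbT.
Qed.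

Lemma pigeon (ev : 'I_n -> R) : exists s : R, [/\ 0 < s, s < 1 & forall j, ev j != s].
Proof.
pose c (k : 'I_n.+1) : R := (k.+1)%:R / (n.+2)%:R.
have n2 : (n.+2)%:R != 0 :> R by rewrite pnatr_eq0.
have cinj : injective c.
  move=> k k' /(mulIf (invr_neq0 n2)) /eqP; rewrite eqr_nat eqSS => /eqP h.
  exact: ord_inj.
have [k hk] : exists k, forall j, ev j != c k.
  apply/not_existsP => H.
  have sub : {subset map c (enum 'I_n.+1) <= map ev (enum 'I_n)}.
    move=> _ /mapP [k _ ->].
    have := H k.
    move/existsNP => [j /negP]; rewrite negbK => /eqP <-.
    by apply: map_f; rewrite mem_enum.
  have := uniq_leq_size (etrans (map_inj_uniq cinj _) (enum_uniq _)) sub.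
  by rewrite !size_map -!enumT -!cardT !card_ord ltnn.
exists (c k); split => //.
  by rewrite /c divr_gt0 // ltr0Sn.
by rewrite /c ltr_pdivrMr ?ltr0Sn // mul1r ltr_nat ltnS.
Qed.

End Misc.


Section Good.
Variable R : realType.
Local Notation C := (R[i]).
Variable n : nat.

Lemma good_uniq (B : 'M[C]_n) s s' : herm B -> \rank (Pr B s) = \rank (Pr B s') ->
  Pr B s = Pr B s'.
Proof.
move=> hB hr; have [ss'|s's] := leP s s'.
  have H : forall j, s' < ev B j -> s < ev B j by move=> j h; apply: le_lt_trans ss' h.
  have := Pr_rank_eq H; rewrite hr leqnn => /(_ isT) e.
  by rewrite /Pr; congr W; apply: funext => j; rewrite /chi e.
have H : forall j, s < ev B j -> s' < ev B j by move=> j h; apply: lt_trans s's h.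
have := Pr_rank_eq H; rewrite hr leqnn => /(_ isT) e.
by rewrite /Pr; congr W; apply: funext => j; rewrite /chi e.
Qed.

Lemma good_le (B : 'M[C]_n) s s' : herm B -> (\rank (Pr B s) <= \rank (Pr B s'))%N ->
  le_mx (Pr B s) (Pr B s').
Proof.
move=> hB hr; apply: Pr_le => j; have [ss'|s's] := leP s' s.
  by move=> h; apply: le_lt_trans ss' h.
have H : forall j, s' < ev B j -> s < ev B j by move=> i h; apply: lt_trans s's h.
by have := Pr_rank_eq H hr j => ->.
Qed.

Lemma ab_opp (z : C) : ab (- z) = ab z.
Proof. by rewrite /ab nrm2N. Qed.

End Good.

Unset Implicit Arguments.
Set Strict Implicit.
Local Open Scope classical_set_scope.
Local Open Scope ring_scope.

Theorem lemma3p1 (R : realType) (X : topologicalType) (n : nat)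
    (a b c : X -> 'M[R[i]]_n) :
  compact [set: X] -> hausdorff_space X ->
  continuous a -> continuous b -> continuous c ->
  (forall x, psd_mx (a x)) -> (forall x, psd_mx (b x)) -> (forall x, psd_mx (c x)) ->
  (forall x, b x *m a x = a x) -> (forall x, c x *m b x = b x) ->
  exists (U : 'I_n.+1 -> set X) (p : 'I_n.+1 -> X -> 'M[R[i]]_n),
    (forall k, open (U k)) /\
    (forall k, {within U k, continuous (p k)}) /\
    (forall k x, U k x -> orth_proj_mx (p k x) /\ \rank (p k x) = k) /\
    \bigcup_k U k = [set: X] /\
    (forall (k l : 'I_n.+1) x, (k <= l)%N -> U k x -> U l x ->
       le_mx (p k x) (p l x)) /\
    (forall k x, U k x -> p k x *m a x = a x /\ c x *m p k x = p k x).
Proof.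
move=> _ _ ca cob cc pa pb pc ba cbb.
have hb : forall x, herm (b x) by move=> x; case: (pb x).
pose good x (s : R) (k : nat) := [/\ 0 < s, s < 1, (forall j, ev (b x) j != s) &
   \rank (Pr (b x) s) = k].
pose U := fun k : 'I_n.+1 => [set x | exists s, good x s k].
pose p := fun (k : 'I_n.+1) x => Pr (b x) (xget 0 [set s | good x s k]).
have pE : forall (k : 'I_n.+1) x s, good x s k -> p k x = Pr (b x) s.
  move=> k x s gs; have := xgetPex 0 (ex_intro (fun s => good x s k) s gs).
  move=> gx; rewrite /p; apply: good_uniq (hb x) _.
  by case: gx => _ _ _ ->; case: gs => _ _ _ ->.
have key : forall (k : 'I_n.+1) x0, U k x0 -> forall e : R, 0 < e ->
    \forall x \near x0, U k x /\ forall i j, ab ((p k x - p k x0) i j) < e.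
  move=> k x0 [t gt] e e0.
  have gt' := gt; case: gt => t0 t1 tne trk.
  have hpos : forall j, 0 < `|ev (b x0) j - t| by move=> j; rewrite normr_gt0 subr_eq0 tne.
  have [e1 [e1p he1]] := lb_pos hpos.
  set d := e1 / 4.
  have d0 : 0 < d by rewrite /d divr_gt0.
  have gap : forall j, ev (b x0) j <= t - 4 * d \/ t + 4 * d <= ev (b x0) j.
    by move=> j; have := he1 j; rewrite ler_normr => /orP[h|h]; [right|left]; rewrite /d; lra.
  set mn := Num.min 1 e.
  have mn0 : 0 < mn by rewrite lt_min ltr01 e0.
  have mn1 : mn <= 1 by rewrite ge_min lexx.
  have mne : mn <= e by rewrite ge_min lexx orbT.
  have n0 : 0 <= n%:R :> R := ler0n _ _.
  have q0 : 0 < 2 * n%:R + 2 :> R by lra.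
  set m := d * mn / (2 * n%:R + 2).
  have m0 : 0 < m by rewrite /m divr_gt0 // mulr_gt0.
  have hm : m * (2 * n%:R + 2) = d * mn by rewrite /m mulfVK // gt_eqF.
  have nm : 2 * n%:R * m <= d by nra.
  have nm2 : n%:R * m < d * e by nra.
  have m0C : 0 < (m%:C)%C :> R[i] by rewrite -[0]/((0 : R)%:C)%C RC_lt.
  have hb0 : \forall x \near x0, ball (b x0) ((m%:C)%C) (b x).
    by apply: cvg_ball => //; exact: cob.
  move: hb0; apply: filterS => x hbx.
  have Em : forall i j, ab ((b x - b x0) i j) <= m.
    move=> i j; case: hbx => _ /(_ i j) h.
    have h' : `|b x0 i j - b x i j : R[i]| < (m%:C)%C := h.
    rewrite normE RC_lt in h'; apply: ltW.
    have -> : (b x - b x0) i j = - (b x0 i j - b x i j) by rewrite !mxE opprB.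
    by rewrite ab_opp.
  have [hne hrk hFR] := near_main (hb x0) (hb x) d0 gap Em nm.
  have gx : good x t k by split => //; rewrite hrk.
  split; first by exists t.
  rewrite (pE _ _ _ gx) (pE _ _ _ gt') => i j.
  have FB : FR (b x - b x0) <= n%:R * n%:R * m ^+ 2.
    apply: FR_bound => i' j'; rewrite -ab_sq.
    have := Em i' j'; have := ab_ge0 ((b x - b x0) i' j'); nra.
  move: hFR FB.
  set E0 := Pr (b x) t - Pr (b x0) t.
  have := FR_entry E0 i j; have := ab_sq (E0 i j); have := ab_ge0 (E0 i j); have := FR_ge0 E0.
  move: (FR E0) (ab (E0 i j)) (nrm2 (E0 i j)) (FR (b x - b x0)) => F z N G F0 z0 zs NF hFR FB.
  have h1 : d ^+ 2 * F < d ^+ 2 * e ^+ 2.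
    apply: le_lt_trans hFR _; apply: le_lt_trans FB _.
    have : 0 <= n%:R * m by apply: mulr_ge0 => //; apply: ltW.
    move=> nm0; nra.
  have h2 : F < e ^+ 2 by rewrite ltr_pM2l ?exprn_gt0 in h1.
  nra.
have opU : forall k, open (U k).
  move=> k; rewrite openE => x0 Ux0.
  have := key k x0 Ux0 1 ltr01.
  by apply: filterS => x [].
exists U, p; split; first exact: opU.
split; [|split; [|split; [|split]]].
- move=> k; rewrite continuous_open_subspace; last exact: opU.
  move=> x0; rewrite inE => Ux0; apply/cvg_ballP => e e0.
  have [er ee] : exists er : R, e = (er%:C)%C.
    by exists (complex.Re e); rewrite RRe_real // gtr0_real.
  have er0 : 0 < er by rewrite -RC_lt -ee.
  have := key k x0 Ux0 er er0.
  apply: filterS => x [_ H]; split => // i j.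
  rewrite /ball /=; change (`|p k x0 i j - p k x i j : R[i]| < e); rewrite normE ee RC_lt.
  have -> : p k x0 i j - p k x i j = - ((p k x - p k x0) i j) by move: (p k x) (p k x0) => A B; rewrite !mxE opprB.
  by rewrite ab_opp; apply: H.
- move=> k x [s gs]; rewrite (pE k x s gs); case: gs => _ _ _ rk.
  by split => //; split; [apply: Pr_idem | apply: Pr_adj].
- apply/seteqP; split => // x _.
  have [s [s0 s1 hs]] := pigeon (ev (b x)).
  have kn : (\rank (Pr (b x) s) < n.+1)%N by rewrite ltnS rank_leq_row.
  by exists (Ordinal kn) => //; exists s.
- move=> k l x kl [s gs] [s' gs']; rewrite (pE _ _ _ gs) (pE _ _ _ gs').
  apply: good_le (hb x) _.
  by case: gs => _ _ _ ->; case: gs' => _ _ _ ->.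
- move=> k x [s gs]; rewrite (pE _ _ _ gs); case: gs => s0 s1 _ _; split.
    exact: Pr_fix_a (hb x) (ba x) s1.
  exact: Pr_fix_c (hb x) (cbb x) (ltW s0).
Qed.
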